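(* Let $1\le p\le 2$, let $X$ and $Y$ be Banach spaces such that $X$ has type $p$, and let $u:X\to Y$ be a continuous linear operator. If the adjoint $u^*:Y^*\to X^*$ is almost $p^*$-summing (where $\frac1p+\frac1{p^*}=1$), then $u$ is Cohen strongly $p$-summing, i.e. $(u(x_i))_{i=1}^\infty\in\ell_p\langle Y\rangle$ whenever $(x_i)_{i=1}^\infty\in\ell_p(X)$.
   Context: $r_i$ denote the Rademacher functions. A Banach space $X$ has type $p$ if there is $C\ge0$ with $\left(\int_0^1\left\|\sum_{i=1}^m r_i(t)x_i\right\|^2dt\right)^{1/2}\le C\left(\sum_{i=1}^m\|x_i\|^p\right)^{1/p}$ for all $m$ and $x_1,\dots,x_m\in X$. For $1\le s\le\infty$, $\|(x_i)\|_{w,s}:=\sup_{x^*\in B_{X^*}}\|(x^*(x_i))_i\|_s$ and $\ell_s^w(X)$ is the space of sequences where this is finite. $\ell_p\langle Y\rangle$ is the space of sequences $(y_i)\subset Y$ with $\sup\{\sum_i|y_i^*(y_i)|:(y_i^* )\in B_{\ell_{p^*}^w(Y^* )}\}<\infty$. An operator $v\in\mathcal L(E,F)$ is almost $s$-summing if there is $C\ge0$ with $\left(\int_0^1\left\|\sum_{i=1}^m r_i(t)v(x_i)\right\|^2dt\right)^{1/2}\le C\|(x_i)_{i=1}^m\|_{w,s}$ for all $m$ and $x_1,\dots,x_m\in E$. *)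

(* Defs.v *)
From HB Require Import structures.
From mathcomp Require Import all_boot all_order all_algebra.
From mathcomp Require Import all_classical all_reals all_analysis.
Set Implicit Arguments. Unset Strict Implicit. Unset Printing Implicit Defensive.
Import Order.TTheory GRing.Theory Num.Theory.
Import numFieldNormedType.Exports.
Local Open Scope classical_set_scope.
Local Open Scope ring_scope.

Section Defs.
Variable R : realType.

Definition rademacher (n : nat) (t : R) : R := Num.sg (sin (2 ^+ n * pi * t)).

Definition sq_int01 (g : R -> R) : \bar R :=
  (\int[lebesgue_measure]_(t in `[0%R, 1%R]) ((g t) ^+ 2)%:E)%E.

Definition dual (X : normedModType R) : set (X -> R) :=
  [set f | (forall (a : R) (x y : X), f (a *: x + y) = a * f x + f y)
           /\ continuous f].
Arguments dual : clear implicits.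

Definition dnorm (X : normedModType R) (f : X -> R) : R :=
  sup [set `|f x| | x in [set x : X | `|x| <= 1]].
Arguments dnorm : clear implicits.

Definition bidual_ball (X : normedModType R) : set ((X -> R) -> R) :=
  [set phi | (forall (a : R) (f g : X -> R), f \in dual X -> g \in dual X ->
                phi (fun x => a * f x + g x) = a * phi f + phi g)
          /\ (forall f, f \in dual X -> `|phi f| <= dnorm X f)].
Arguments bidual_ball : clear implicits.

Definition conj_exp (p : R) : \bar R :=
  if p == 1 then +oo%E else (p / (p - 1))%:E.

Definition lnorm_fin (s : \bar R) (m : nat) (a : 'I_m -> R) : R :=
  match s with
  | +oo%E => \big[Order.max/0]_(i < m) `|a i|
  | r%:E => (\sum_(i < m) `|a i| `^ r) `^ r^-1
  | -oo%E => 0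
  end.

Definition has_type (p : R) (X : normedModType R) : Prop :=
  exists C : R, 0 <= C /\
    forall (m : nat) (x : 'I_m -> X),
      (sq_int01 (fun t => `|\sum_(i < m) rademacher i.+1 t *: x i|%R)
        <= ((C * (\sum_(i < m) `|x i| `^ p) `^ p^-1) ^+ 2)%:E)%E.

Definition weak_norm_dual (s : \bar R) (Y : normedModType R) (m : nat)
  (ys : 'I_m -> (Y -> R)) : R :=
  sup [set lnorm_fin s (fun i => phi (ys i)) | phi in bidual_ball Y].

Definition adjoint (X Y : normedModType R) (u : X -> Y) (g : Y -> R) : X -> R :=
  fun x => g (u x).

Definition adjoint_almost_summing (s : \bar R) (X Y : normedModType R)
  (u : X -> Y) : Prop :=
  exists C : R, 0 <= C /\
    forall (m : nat) (ys : 'I_m -> (Y -> R)), (forall i, ys i \in dual Y) ->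
      (sq_int01 (fun t => dnorm X (fun x : X =>
                  (\sum_(i < m) rademacher i.+1 t * adjoint u (ys i) x)%R))
        <= ((C * weak_norm_dual s ys) ^+ 2)%:E)%E.

Definition weak_ball_dual (s : \bar R) (Y : normedModType R)
  (ys : nat -> (Y -> R)) : Prop :=
  (forall i, ys i \in dual Y) /\
  forall phi, phi \in bidual_ball Y ->
    match s return Prop with
    | +oo%E => forall i, `|phi (ys i)| <= 1
    | r%:E => (\sum_(0 <= i <oo) (`|phi (ys i)| `^ r)%:E <= 1)%E
    | -oo%E => False
    end.

Definition in_lp (p : R) (X : normedModType R) (x : nat -> X) : Prop :=
  (\sum_(0 <= i <oo) (`|x i| `^ p)%:E < +oo)%E.

Definition in_cohen_lp (p : R) (Y : normedModType R) (y : nat -> Y) : Prop :=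
  exists M : R, forall ys : nat -> (Y -> R), weak_ball_dual (conj_exp p) ys ->
    (\sum_(0 <= i <oo) (`|ys i (y i)|)%:E <= M%:E)%E.

Definition cohen_strongly_summing (p : R) (X Y : normedModType R)
  (u : X -> Y) : Prop :=
  forall x : nat -> X, in_lp p x -> in_cohen_lp p (fun i => u (x i)).

End Defs.

(* Main.v *)
Require Import Defs.
From HB Require Import structures.
From mathcomp Require Import all_boot all_order all_algebra.
From mathcomp Require Import all_classical all_reals all_analysis.
From mathcomp Require Import measurable_realfun.
From mathcomp Require Import lra ring.
Import Order.TTheory GRing.Theory Num.Theory.
Import numFieldNormedType.Exports.
Local Open Scope classical_set_scope.
Local Open Scope ring_scope.

Section Signs.
Variable R : realType.

Definition sv (m k : nat) : 'I_m -> R := fun i => (-1) ^+ (k %/ 2 ^ (m - i.+1)).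
Definition vcons m (a : R) (v : 'I_m -> R) : 'I_m.+1 -> R :=
  fun i => if unlift ord0 i is Some j then v j else a.
Arguments vcons {m}.

Lemma vcons0 m a (v : 'I_m -> R) : vcons a v ord0 = a.
Proof. by rewrite /vcons unlift_none. Qed.
Lemma vcons_lift m a (v : 'I_m -> R) (j : 'I_m.+1.-1) : vcons a v (lift ord0 j) = v j.
Proof. by rewrite /vcons liftK. Qed.

Lemma sv_split m k : sv m.+1 k = vcons ((-1) ^+ (k %/ 2 ^ m)) (sv m (k %% 2 ^ m)).
Proof.
apply/funext => i; case: (unliftP ord0 i) => [j ->|->]; last first.
  by rewrite vcons0 /sv /= subSS subn0.
rewrite vcons_lift /sv /= subSS.
have e : (2 ^ m = 2 ^ j.+1 * 2 ^ (m - j.+1))%N.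
  by rewrite -expnD subnKC.
rewrite -signr_odd -[in RHS]signr_odd; congr (_ ^+ _).
rewrite {1}(divn_eq k (2 ^ m)) {2}e mulnA divnMDl ?expn_gt0 //.
by rewrite oddD oddM oddX /= andbF /=.
Qed.

Lemma sum_rec m (F : ('I_m.+1 -> R) -> R) :
  \sum_(0 <= k < 2 ^ m.+1) F (sv m.+1 k) =
  \sum_(0 <= k < 2 ^ m) F (vcons 1 (sv m k)) +
  \sum_(0 <= k < 2 ^ m) F (vcons (-1) (sv m k)).
Proof.
rewrite expnS mul2n -addnn (big_cat_nat _ (leq_addr _ _)) //=; congr (_ + _).
  rewrite !big_nat; apply: eq_bigr => k /andP[_ hk].
  by rewrite sv_split divn_small // modn_small.
rewrite -[in X in \sum_(X <= _ < _) _](add0n (2 ^ m)%N) big_addn addnK !big_nat; apply: eq_bigr => k /andP[_ hk].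
rewrite sv_split divnDr ?dvdnn // divnn expn_gt0 /= divn_small // add0n.
by rewrite -modnDmr modnn addn0 modn_small // expr1.
Qed.

Lemma sum_ones m : \sum_(0 <= k < 2 ^ m) (1 : R) = (2 ^ m)%:R.
Proof. by rewrite big_const_nat subn0 iter_addr addr0. Qed.

Lemma orth m (i j : 'I_m) :
  \sum_(0 <= k < 2 ^ m) sv m k i * sv m k j = (i == j)%:R * (2 ^ m)%:R.
Proof.
elim: m i j => [|m IH] i j; first by case: i.
have := @sum_rec m (fun v => v i * v j); rewrite /= => ->.
case: (unliftP ord0 i) => [i' ->|->]; case: (unliftP ord0 j) => [j' ->|->].
- under eq_bigr do rewrite !vcons_lift.
  under [X in _ + X]eq_bigr do rewrite !vcons_lift.
  rewrite IH (inj_eq (@lift_inj _ ord0)) -mulrDr -natrD addnn -mul2n -expnS.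
  by [].
- under eq_bigr do rewrite !vcons_lift !vcons0 mulr1.
  under [X in _ + X]eq_bigr do rewrite !vcons_lift !vcons0 mulrN1.
  by rewrite sumrN subrr eq_sym (negbTE (neq_lift _ _)) mul0r.
- under eq_bigr do rewrite !vcons_lift !vcons0 mul1r.
  under [X in _ + X]eq_bigr do rewrite !vcons_lift !vcons0 mulN1r.
  by rewrite sumrN subrr (negbTE (neq_lift _ _)) mul0r.
- under eq_bigr do rewrite !vcons0 mulr1.
  under [X in _ + X]eq_bigr do rewrite !vcons0 mulrNN mulr1.
  rewrite eqxx mul1r sum_ones.
  by rewrite -natrD addnn -mul2n -expnS.
Qed.
End Signs.

Section Rad.
Variable R : realType.

Lemma radem_val m k (t : R) (i : nat) : (i < m)%N ->
  k%:R / (2 ^ m)%:R < t < k.+1%:R / (2 ^ m)%:R ->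
  rademacher i.+1 t = (-1) ^+ (k %/ 2 ^ (m - i.+1)).
Proof.
move=> im /andP[lt1 lt2].
set e := (m - i.+1)%N; set j := (k %/ 2 ^ e)%N.
have em : (2 ^ m = 2 ^ i.+1 * 2 ^ e)%N by rewrite -expnD subnKC.
have Npos : (0 : R) < (2 ^ m)%:R by rewrite ltr0n expn_gt0.
have Bpos : (0 : R) < (2 ^ e)%:R by rewrite ltr0n expn_gt0.
have h1 : (j * 2 ^ e <= k)%N by apply: leq_trunc_div.
have h2 : (k < j.+1 * 2 ^ e)%N by apply: ltn_ceil; rewrite expn_gt0.
have tA1 : j%:R < t * (2 ^ i.+1)%:R.
  rewrite -(ltr_pM2r Bpos) -natrM -mulrA -natrM -em.
  apply: le_lt_trans (_ : k%:R < _); first by rewrite ler_nat.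
  by rewrite -ltr_pdivrMr.
have tA2 : t * (2 ^ i.+1)%:R < j.+1%:R.
  rewrite -(ltr_pM2r Bpos) -natrM -mulrA -natrM -em.
  apply: lt_le_trans (_ : k.+1%:R <= _); last by rewrite ler_nat.
  by rewrite -ltr_pdivlMr.
rewrite /rademacher.
set x := _ * pi * t.
have xe : x = (x - pi *+ j) + pi *+ j by rewrite subrK.
have hx : 0 < x - pi *+ j < pi.
  have xE : x = (t * (2 ^ i.+1)%:R) * pi by rewrite /x natrX mulrC mulrA.
  have pi0 := @pi_gt0 R.
  have hx1 : pi *+ j < x by rewrite xE -(mulr_natl pi j) ltr_pM2r.
  have hx2 : x < pi *+ j + pi.
    by rewrite xE -(mulr_natl pi j) -[X in _ < _ + X](mul1r pi) -mulrDl ltr_pM2r // natr1.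
  move: hx1 hx2; set y := pi *+ j; move=> hx1 hx2.
  apply/andP; split; lra.
rewrite xe (alternatingn (@sinDpi R)) sgrM sgrX sgrN1 gtr0_sg ?mulr1 //.
exact: sin_gt0_pi.
Qed.
End Rad.

Section Int.
Variable R : realType.

Lemma meas_except (D Z : set R) (f h : R -> R) : measurable D -> countable Z ->
  measurable_fun D h -> (forall t, D t -> ~ Z t -> f t = h t) ->
  measurable_fun D f.
Proof.
move=> mD cZ mh fh _ Y mY.
have -> : D `&` f @^-1` Y = ((D `&` h @^-1` Y) `&` ~` Z) `|` (D `&` Z `&` f @^-1` Y).
  apply/seteqP; split => t /=.
  - move=> [Dt Yft]; case: (pselect (Z t)) => Zt; [right | left] => //.
    by split => //; split => //; rewrite -fh.
  - by case => [[[Dt Yht] nZ] | [[Dt Zt] Yft]]; split => //; rewrite fh.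
apply: measurableU.
  apply: measurableI; first exact: mh.
  by apply: measurableC; apply: countable_measurable => //; exact: measurable_set1.
apply: countable_measurable; first exact: measurable_set1.
by apply: sub_countable cZ; apply: subset_card_le => t [[]].
Qed.

Lemma sq_int01_step m (g : R -> R) (G : ('I_m -> R) -> R) :
  (forall t, g t = G (fun i : 'I_m => rademacher i.+1 t)) ->
  sq_int01 g = ((\sum_(0 <= k < 2 ^ m) G (sv R m k) ^+ 2) / (2 ^ m)%:R)%:E.
Proof.
move=> hg.
set N := (2 ^ m)%N; set Nr : R := N%:R.
have Npos : 0 < Nr by rewrite ltr0n expn_gt0.
pose I k : set R := `]k%:R / Nr, k.+1%:R / Nr[%classic.
pose c k := G (sv R m k) ^+ 2.
pose h t := \sum_(0 <= k < N) c k * \1_(I k) t.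
pose Z := (fun k : nat => k%:R / Nr) @` setT.
have cZ : countable Z.
  by apply: sub_countable (card_image_le _ _) _; exact: countableP.
have mZ : measurable Z by apply: countable_measurable => //; exact: measurable_set1.
have Z0 : lebesgue_measure Z = 0 by exact: countable_lebesgue_measure0.
have Iin k t : I k t = (k%:R < t * Nr < k.+1%:R).
  by rewrite /I /= in_itv /= ltr_pdivrMr // ltr_pdivlMr.
have key t : `[0, 1]%classic t -> ~ Z t -> exists k, (k < N)%N /\ I k t.
  rewrite /= in_itv /= => /andP[t0 t1] nZ.
  have tN0 : 0 <= t * Nr by rewrite mulr_ge0 // ltW.
  have /andP[k1 k2] := truncn_itv tN0.
  set k := Num.truncn _ in k1 k2.
  have k1' : k%:R < t * Nr.
    rewrite lt_def k1 andbT; apply/eqP => e; apply: nZ; exists k => //.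
    by rewrite -e mulrK // unitfE gt_eqF.
  exists k; split; last by rewrite Iin k1' k2.
  rewrite ltnNge; apply/negP => Nk; apply: nZ; exists N => //.
  rewrite divff ?gt_eqF //; apply/eqP; rewrite eq_le t1 /=.
  rewrite -(ler_pM2r Npos) mul1r andbT; apply: (le_trans _ k1); by rewrite ler_nat.
have Iuniq k j t : I k t -> I j t -> k = j.
  rewrite !Iin => /andP[a1 a2] /andP[b1 b2].
  have : (k < j.+1)%N by rewrite -(ltr_nat R); exact: lt_trans b2.
  have : (j < k.+1)%N by rewrite -(ltr_nat R); exact: lt_trans a2.
  rewrite !ltnS => ? ?; apply/eqP; rewrite eqn_leq; apply/andP; split => //.
have gh t : `[0, 1]%classic t -> ~ Z t -> g t ^+ 2 = h t.
  move=> Dt nZ; have [k [kN Ikt]] := key t Dt nZ.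
  rewrite /h (eq_big_nat _ _ (F2 := fun j => if j == k then c k else 0)); last first.
    move=> j _; rewrite indicE; case: (eqVneq j k) => [->|jk].
      by rewrite mem_set // mulr1.
    by rewrite memNset ?mulr0 // => Ijt; by rewrite (Iuniq _ _ _ Ijt Ikt) eqxx in jk.
  rewrite -big_mkcond big_nat1_eq leq0n kN /= /c hg; congr (G _ ^+ 2).
  apply/funext => i; have := @radem_val R m k t i (ltn_ord i).
  have Ikt' : k%:R / Nr < t < k.+1%:R / Nr by move: Ikt; rewrite /I /= in_itv.
  by move=> /(_ Ikt') ->.
have mi k (D : set R) : measurable_fun D (fun x => c k * \1_(I k) x).
  apply: (@measurable_funM _ _ R D (cst (c k)) (\1_(I k))).
    exact: measurable_cst.
  by apply: measurable_indic; exact: measurable_itv.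
rewrite /sq_int01.
have -> : (\int[lebesgue_measure]_(t in `[0%R, 1%R]%classic) ((g t) ^+ 2)%:E =
   \int[lebesgue_measure]_(t in `[0%R, 1%R]%classic) (h t)%:E)%E.
  apply: ae_eq_integral.
  - exact: measurable_itv.
  - apply/measurable_EFinP; apply: (@meas_except _ Z _ h (measurable_itv _) cZ).
      apply: measurable_sum => k.
      exact: mi.
    by move=> t Dt nZ; rewrite gh.
  - apply/measurable_EFinP.
    apply: measurable_sum => k.
    exact: mi.
  - exists Z; split => // t /= nt; apply: contrapT => nZ; apply: nt => Dt.
    by rewrite gh.

have -> : (\int[lebesgue_measure]_(t in `[0%R, 1%R]%classic) (h t)%:E =
  \int[lebesgue_measure]_(t in `[0%R, 1%R]%classic)
     (\sum_(0 <= k < N) (c k * \1_(I k) t)%:E))%E.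
  by apply: eq_integral => t _; rewrite sumEFin.
have mhk (k : nat) : measurable_fun (`[0%R, 1%R]%classic : set R) (fun t : R => (c k * \1_(I k) t)%:E).
  apply/measurable_EFinP.
  exact: mi.
have hk0 (k : nat) (t : R) : `[0%R, 1%R]%classic t -> (0 <= (c k * \1_(I k) t)%:E)%E.
  by move=> _; rewrite lee_fin mulr_ge0 // ?sqr_ge0 // indicE ler0n.
rewrite ge0_integral_sum; [ | exact: measurable_itv | exact: mhk | exact: hk0].
rewrite (eq_big_nat _ _ (F2 := fun k => (c k / Nr)%:E)); last first.
  move=> k /andP[_ kN].
  have ck0 : c k < 0 -> I k = set0 by rewrite ltNge sqr_ge0.
  have := @integralZl_indic _ _ _ lebesgue_measure _ (measurable_itv `[0%R, 1%R])
    (fun _ => I k) (c k) ck0 (measurable_itv _).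
  rewrite /= => ->.
  rewrite integral_indic //; last exact: measurable_itv.
  rewrite setIidl; last first.
    move=> t; rewrite /I /= !in_itv /= => /andP[a b]; apply/andP; split.
      by apply: ltW; apply: le_lt_trans a; rewrite divr_ge0 // ltW.
    apply: ltW; apply: (lt_le_trans b).
    by rewrite ler_pdivrMr // mul1r ler_nat.
  have L : lebesgue_measure (`]k%:R / Nr, k.+1%:R / Nr[%classic : set R) = (1 / Nr)%:E.
    rewrite lebesgue_measure_itv /= ifT; last first.
      by rewrite lte_fin ltr_pM2r ?invr_gt0 // ltr_nat.
    by rewrite -EFinB -mulrBl -natrB // subSnn.
  transitivity ((c k)%:E * (1 / Nr)%:E)%E; first by congr (_ * _)%E; exact: L.
  by rewrite -EFinM mul1r.
by rewrite sumEFin big_distrl.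
Qed.
End Int.

Set Implicit Arguments. Unset Strict Implicit.

Section FA.
Variable R : realType.

Definition islin (V : normedModType R) (f : V -> R) :=
  forall (a : R) (x y : V), f (a *: x + y) = a * f x + f y.


Lemma lin0 (V : normedModType R) (f : V -> R) : islin f -> f 0 = 0.
Proof.
move=> fl; have := fl 1 0 0; rewrite scale1r addr0 mul1r.
by move/(congr1 (fun z => z - f 0)); rewrite subrr addrK.
Qed.

Lemma linD (V : normedModType R) (f : V -> R) x y : islin f -> f (x + y) = f x + f y.
Proof. by move=> fl; rewrite -[x]scale1r fl mul1r scale1r. Qed.

Lemma linZ (V : normedModType R) (f : V -> R) a x : islin f -> f (a *: x) = a * f x.
Proof. by move=> fl; rewrite -[a *: x]addr0 fl lin0 // addr0. Qed.

Lemma lin_sum (V : normedModType R) (f : V -> R) (I : Type) (r : seq I)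
  (a : I -> R) (xs : I -> V) : islin f ->
  f (\sum_(i <- r) a i *: xs i) = \sum_(i <- r) a i * f (xs i).
Proof.
move=> fl; elim: r => [|i r IH]; first by rewrite !big_nil lin0.
by rewrite !big_cons linD // linZ // IH.
Qed.

Lemma lin_bound (V : normedModType R) (f : V -> R) : islin f -> continuous f ->
  exists B, forall x, `|x| <= 1 -> `|f x| <= B.
Proof.
move=> fl fc.
have := fc 0.
move/cvgrPdist_lt => /(_ 1 ltr01) /nbhs_ballP [d /= d0 Hd].
have Hd' w : `|w| < d -> `|f w| < 1.
  move=> wd; have := Hd w; rewrite lin0 // sub0r normrN; apply.
  by rewrite -ball_normE /ball_ /= sub0r normrN.
exists (2 / d) => x x1.
have h : `|f ((d / 2) *: x)| < 1.
  apply: Hd'; rewrite normrZ ger0_norm ?divr_ge0 ?ltW //.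
  apply: (le_lt_trans (y := d / 2)); first by rewrite ler_piMr // divr_ge0 // ltW.
  by rewrite ltr_pdivrMr // ltr_pMr // ltr1n.
rewrite linZ // normrM ger0_norm ?divr_ge0 ?ltW // in h.
rewrite ler_pdivlMr //.
have : d / 2 * `|f x| = (`|f x| * d) / 2 by rewrite mulrC mulrA.
move=> e; rewrite e in h; move: h; rewrite ltr_pdivrMr // mul1r => h.
exact: ltW.
Qed.

Lemma dnorm_le (V : normedModType R) (f : V -> R) : islin f ->
  (exists B, forall x, `|x| <= 1 -> `|f x| <= B) ->
  forall z, `|f z| <= dnorm f * `|z|.
Proof.
move=> fl [B hB] z.
have hub : has_ubound [set `|f x| | x in [set x : V | `|x| <= 1]].
  by exists B => _ [x x1 <-]; exact: hB.
have le v : `|v| <= 1 -> `|f v| <= dnorm f.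
  by move=> v1; apply: (ub_le_sup hub); exists v.
case: (eqVneq z 0) => [->|z0]; first by rewrite lin0 // !normr0 mulr0.
have h : `|f (`|z|^-1 *: z)| <= dnorm f by apply: le; rewrite normfZV.
rewrite linZ // normrM ger0_norm ?invr_ge0 // mulrC in h.
by rewrite -ler_pdivrMr ?normr_gt0.
Qed.
End FA.

Unset Implicit Arguments. Set Strict Implicit.

Section Core.
Variable R : realType.

Lemma amgm (l a b : R) : 0 < l -> a * b <= (l * a ^+ 2 + b ^+ 2 / l) / 2.
Proof.
move=> l0.
have h : 0 <= l^-1 * (l * a - b) ^+ 2 by rewrite mulr_ge0 // ?sqr_ge0 // ltW ?invr_gt0.
have e : l^-1 * (l * a - b) ^+ 2 = l * a ^+ 2 - 2 * (a * b) + b ^+ 2 / l.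
  by field; rewrite gt_eqF.
rewrite e in h; lra.
Qed.

Lemma fin_ineq (A B c b : R) : 0 <= c -> 0 <= b -> A <= c ^+ 2 -> B <= b ^+ 2 ->
  ((b + 1) / (c + 1) * A + B / ((b + 1) / (c + 1))) / 2 <= (c + 1) * (b + 1).
Proof.
move=> c0 b0 hA hB.
rewrite invf_div.
set l := (b + 1) / (c + 1); set il := (c + 1) / (b + 1).
have l0 : 0 <= l by rewrite divr_ge0 // addr_ge0.
have il0 : 0 <= il by rewrite divr_ge0 // addr_ge0.
have e1 : l * (c + 1) = b + 1 by rewrite divfK // gt_eqF // ltr_wpDl.
have e2 : il * (b + 1) = c + 1 by rewrite divfK // gt_eqF // ltr_wpDl.
have h1 : l * A <= l * (c + 1) ^+ 2.
  apply: ler_wpM2l => //; apply: (le_trans hA); nra.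
have h2 : B * il <= (b + 1) ^+ 2 * il.
  apply: ler_wpM2r => //; apply: (le_trans hB); nra.
nra.
Qed.

Lemma norm_sv m k i : `|sv R m k i| = 1.
Proof. by rewrite /sv normrX normrN1 expr1n. Qed.

Lemma core (X Y : normedModType R) (u : {linear X -> Y}) (ucont : continuous u)
  (m : nat) (x : 'I_m -> X) (y : 'I_m -> (Y -> R)) (C b A0 B0 : R) :
  0 <= C -> 0 <= b -> A0 <= C ^+ 2 -> B0 <= b ^+ 2 ->
  (forall i, y i \in @dual R Y) ->
  (sq_int01 (fun t => dnorm (fun z : X =>
      (\sum_(i < m) rademacher i.+1 t * adjoint u (y i) z)%R)) <= A0%:E)%E ->
  (sq_int01 (fun t => `|\sum_(i < m) rademacher i.+1 t *: x i|%R) <= B0%:E)%E ->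
  \sum_(i < m) y i (u (x i)) <= (C + 1) * (b + 1).
Proof.
move=> C0 b0 hAC hBb ydual hA hT.
set N := (2 ^ m)%N; set Nr : R := N%:R.
have Npos : 0 < Nr by rewrite ltr0n expn_gt0.
pose Phi k := fun z : X => \sum_(i < m) sv R m k i * adjoint u (y i) z.
pose Xk k := \sum_(j < m) sv R m k j *: x j.
pose G1 (v : 'I_m -> R) := dnorm (fun z : X => \sum_(i < m) v i * adjoint u (y i) z).
pose G2 (v : 'I_m -> R) := `|\sum_(i < m) v i *: x i|.
have := @sq_int01_step R m _ G1 (fun t => erefl); move=> e1.
rewrite e1 lee_fin in hA.
have := @sq_int01_step R m _ G2 (fun t => erefl); move=> e2.
rewrite e2 lee_fin in hT.
pose a k := G1 (sv R m k); pose bb k := G2 (sv R m k).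
have ylin i : islin (y i) by have [] := set_mem (ydual i).
have ycont i : continuous (y i) by have [] := set_mem (ydual i).
have yulin i : islin (fun z => y i (u z)).
  by move=> c v w; rewrite linearP; exact: ylin.
have yubd i : exists B, forall z, `|z| <= 1 -> `|y i (u z)| <= B.
  apply: (lin_bound (yulin i)) => z.
  exact: (continuous_comp (ucont z) (ycont i (u z))).
have [Bf hBf] := choice yubd.
have Philin k : islin (Phi k).
  move=> c v w; rewrite /Phi /adjoint mulr_sumr -big_split; apply: eq_bigr => i _ /=.
  have := yulin i c v w; rewrite /= => ->; ring.
have Phibd k : exists B, forall z, `|z| <= 1 -> `|Phi k z| <= B.
  exists (\sum_(i < m) Bf i) => z z1.
  apply: (le_trans (ler_norm_sum _ _ _)); apply: ler_sum => i _.
  by rewrite normrM norm_sv mul1r; exact: hBf.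
have abnd k : Phi k (Xk k) <= a k * bb k.
  apply: (le_trans (ler_norm _)); exact: dnorm_le (Philin k) (Phibd k) _.
have PhiE k : Phi k (Xk k) =
    \sum_(i < m) \sum_(j < m) sv R m k i * sv R m k j * y i (u (x j)).
  rewrite /Phi /Xk /adjoint; apply: eq_bigr => i _.
  rewrite linear_sum (eq_bigr (fun j => sv R m k j *: u (x j))); last first.
    by move=> j _; rewrite linearZ.
  rewrite lin_sum // mulr_sumr; apply: eq_bigr => j _; by rewrite mulrA.
set S := \sum_(i < m) y i (u (x i)).
have key : \sum_(0 <= k < N) Phi k (Xk k) = Nr * S.
  rewrite (eq_bigr _ (fun k _ => PhiE k)) exchange_big /S mulr_sumr.
  apply: eq_bigr => i _; rewrite exchange_big /=.
  rewrite (eq_bigr (fun j => ((i == j)%:R * Nr) * y i (u (x j)))); last first.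
    by move=> j _; rewrite -mulr_suml orth.
  rewrite (bigD1 i) //= eqxx mul1r big1 ?addr0 // => j /negbTE ji.
  by rewrite eq_sym ji !mul0r.
pose l := (b + 1) / (C + 1).
have l0 : 0 < l by rewrite divr_gt0 // ltr_wpDl.
have : Nr * S <= (l * \sum_(0 <= k < N) a k ^+ 2 + (\sum_(0 <= k < N) bb k ^+ 2) / l) / 2.
  rewrite -key; apply: (le_trans (ler_sum _ (fun k _ => abnd k))).
  apply: (le_trans (ler_sum _ (fun k _ => @amgm l (a k) (bb k) l0))).
  rewrite -mulr_suml big_split /= -mulr_sumr -mulr_suml //.
move=> hS.
have hA' : (\sum_(0 <= k < N) a k ^+ 2) / Nr <= C ^+ 2 by exact: le_trans hA hAC.
have hT' : (\sum_(0 <= k < N) bb k ^+ 2) / Nr <= b ^+ 2 by exact: le_trans hT hBb.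
apply: (le_trans _ (@fin_ineq _ _ C b C0 b0 hA' hT')).
rewrite -/l -(ler_pM2l Npos); apply: (le_trans hS).
set SA := \sum_(0 <= k < N) a k ^+ 2; set SB := \sum_(0 <= k < N) bb k ^+ 2.
have E : Nr * ((l * (SA / Nr) + SB / Nr / l) / 2) = (l * SA + SB / l) / 2.
  by field; rewrite ?gt_eqF.
by rewrite E.
Qed.
End Core.

Section Main.
Variable R : realType.

Lemma wnd_bound (Y : normedModType R) (p : R) (hp1 : 1 <= p)
  (ys : nat -> (Y -> R)) : weak_ball_dual (conj_exp p) ys ->
  forall m (eps : 'I_m -> R), (forall i, `|eps i| = 1) ->
  0 <= weak_norm_dual (conj_exp p) (fun (i : 'I_m) z => eps i * ys i z) <= 1.
Proof.
move=> [ysd ysb] m eps heps.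
rewrite /weak_norm_dual; set E := (X in sup X).
suff hE : forall v, E v -> 0 <= v <= 1.
  idtac.
  case: (pselect (E !=set0)) => [ne|ne]; last first.
    have -> : E = set0 by apply/seteqP; split => // v Ev; apply: ne; exists v.
    by rewrite sup0 lexx ler01.
  have [v Ev] := ne.
  apply/andP; split; last first.
    by apply: (@ge_sup R E 1 ne) => w Ew; have /andP[] := hE w Ew.
  have /andP[v0 _] := hE v Ev; apply: (le_trans v0).
  have hub : has_ubound E by exists 1 => w Ew; have /andP[] := hE w Ew.
  exact: (@ub_le_sup R E hub v Ev).
move=> _ [phi phib <-].
have [philin phibd] := phib.
have z0 : (fun _ : Y => (0 : R)) \in @dual R Y.
  apply: mem_set; split; last exact: cst_continuous.
  by move=> a v w; rewrite mulr0 addr0.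
have phi0 : phi (fun _ => 0) = 0.
  have := philin 1 _ _ z0 z0.
  have -> : (fun x : Y => 1 * (fun=> (0:R)) x + (fun=> (0:R)) x) = (fun _ => 0).
    by apply/funext => z /=; rewrite mulr0 addr0.
  by rewrite mul1r => /(congr1 (fun z => z - phi (fun=> 0))); rewrite subrr addrK.
have phiy i : `|phi (fun z => eps i * ys i z)| = `|phi (ys i)|.
  have := philin (eps i) _ _ (ysd i) z0.
  have -> : (fun x : Y => eps i * ys i x + (fun=> (0:R)) x) = (fun z => eps i * ys i z).
    by apply/funext => z /=; rewrite addr0.
  by move=> ->; rewrite phi0 addr0 normrM heps mul1r.
have hb := ysb phi (mem_set phib).
move: hb; rewrite /conj_exp; case: eqP => [p1|pn1] hb /=.
  elim/big_ind: _ => //; first by rewrite lexx ler01.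
    move=> a b /andP[a0 a1] /andP[b0 b1].
    by rewrite le_max a0 /= ge_max a1 b1.
  by move=> i _; rewrite phiy normr_ge0 /=; exact: hb.
rewrite powR_ge0 /=.
set r := p / (p - 1).
have r0 : 0 <= r^-1.
  rewrite invr_ge0 divr_ge0 //; lra.
have S1 : \sum_(i < m) `|phi (fun z => eps i * ys i z)| `^ r <= 1.
  under eq_bigr do rewrite phiy.
  rewrite -lee_fin -sumEFin; apply: le_trans hb.
  rewrite -(big_mkord xpredT (fun i => (`|phi (ys i)| `^ r)%:E)).
  by apply: nneseries_lim_ge => n _ _; rewrite lee_fin powR_ge0.
have := @ge0_ler_powR R _ r0 _ _ _ _ S1.
rewrite powR1 => -> //; rewrite nnegrE //.
by apply: sumr_ge0 => i _; rewrite powR_ge0.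
Qed.
End Main.

Theorem corollary2p3 (R : realType) (X Y : completeNormedModType R) (p : R)
  (hp1 : 1 <= p) (hp2 : p <= 2)
  (u : {linear X -> Y}) (ucont : continuous u) :
  has_type p X ->
  adjoint_almost_summing (conj_exp p) u ->
  cohen_strongly_summing p u.
Proof.
move=> [C2 [C20 HT]] [C1 [C10 HA]] x xlp.
set P := fine (\sum_(0 <= i <oo) (`|x i| `^ p)%:E)%E.
have ser0 : (0 <= \sum_(0 <= i <oo) (`|x i| `^ p)%:E)%E.
  by apply: nneseries_ge0 => n _ _; rewrite lee_fin powR_ge0.
have serE : (\sum_(0 <= i <oo) (`|x i| `^ p)%:E)%E = P%:E.
  by rewrite fineK // ge0_fin_numE.
have partP m : \sum_(i < m) `|x i| `^ p <= P.
  rewrite -lee_fin -serE -sumEFin.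
  rewrite -(big_mkord xpredT (fun i => (`|x i| `^ p)%:E)).
  by apply: nneseries_lim_ge => n _ _; rewrite lee_fin powR_ge0.
exists ((C1 + 1) * (C2 * P `^ p^-1 + 1)).
move=> ys ysball; have [ysd _] := ysball.
apply: lime_le.
  by apply: is_cvg_nneseries => n _ _; rewrite lee_fin normr_ge0.
apply: nearW => m.
rewrite sumEFin lee_fin big_mkord.
pose eps (i : 'I_m) : R := if 0 <= ys i (u (x i)) then 1 else -1.
have heps i : `|eps i| = 1 by rewrite /eps; case: ifP; rewrite ?normrN normr1.
pose y' (i : 'I_m) := fun z => eps i * ys i z.
have -> : \sum_(i < m) `|ys i (u (x i))| = \sum_(i < m) y' i (u (x i)).
  apply: eq_bigr => i _; rewrite /y' /eps; case: ifP => h.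
    by rewrite mul1r ger0_norm.
  by rewrite mulN1r ltr0_norm // ltNge h.
have y'd i : y' i \in @dual R Y.
  have [hl hc] := set_mem (ysd i).
  apply: mem_set; split.
    by move=> a v w; rewrite /y' hl; ring.
  by move=> z; apply: cvgMr; exact: hc.
have /andP[w0 w1] := @wnd_bound R Y p hp1 ys ysball m eps heps.
set Q := (\sum_(i < m) `|x i| `^ p) `^ p^-1.
have Q0 : 0 <= Q by exact: powR_ge0.
have QP : Q <= P `^ p^-1.
  apply: ge0_ler_powR; rewrite ?nnegrE ?invr_ge0 ?partP //; first lra.
    by apply: sumr_ge0 => i _; rewrite powR_ge0.
  apply: le_trans (partP 0%N); by rewrite big_ord0.
apply: (le_trans (@core R X Y u ucont m (fun i : 'I_m => x i) y' C1 (C2 * Q)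
  ((C1 * weak_norm_dual (conj_exp p) y') ^+ 2) ((C2 * Q) ^+ 2) _ _ _ _ y'd _ _)).
- exact: C10.
- by rewrite mulr_ge0.
- rewrite exprMn ler_piMr ?sqr_ge0 //; nra.
- exact: lexx.
- exact: HA.
- exact: HT.
- apply: ler_wpM2l; first by rewrite addr_ge0.
  by rewrite lerD2r; apply: ler_wpM2l.
Qed.
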